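(* Let $\mathbb{K}$ be a topological field, $d\in\mathbb{N}$, $F$ a topological $\mathbb{K}$-vector space, $U\subseteq\mathbb{K}^d$ open or of the form $U_1\times\cdots\times U_d$ with $U_i\subseteq\mathbb{K}$ having dense interior, and $f\colon U\to F$. If $f$ is $C^k_{SDS}$ for some $k\in\mathbb{N}_0$ (resp., if $\mathbb{K}$ is a valued field and $f$ is $C^{k,\sigma}_{SDS}$ for some $\sigma>0$), then for each $\alpha\in\mathbb{N}_0^d$ with $|\alpha|\le k$ the map $f^{<\alpha>}\colon U^{<\alpha>}\to F$ is $C^{k-|\alpha|}_{SDS}$ (resp., $C^{k-|\alpha|,\sigma}_{SDS}$).
   Context: Topological fields are Hausdorff and non-discrete; vector spaces Hausdorff; valued field: absolute value defining a non-discrete topology. For $\alpha\in\mathbb{N}_0^d$, $|\alpha|=\sum\alpha_i$; write $x\in\mathbb{K}^{d+|\alpha|}$ as $(x^{(1)},\ldots,x^{(d)})$, $x^{(i)}=(x^{(i)}_0,\ldots,x^{(i)}_{\alpha_i})$. $U^{<\alpha>}$: set of $x$ with $(x^{(1)}_{i_1},\ldots,x^{(d)}_{i_d})\in U$ for all $0\le i_\ell\le\alpha_\ell$ (this is open, resp. a product of sets with dense interior, in $\mathbb{K}^{d+|\alpha|}$, so the same definitions apply to maps on it with $d$ replaced by $d+|\alpha|$); $U^{>\alpha<}$: those $x$ whose entries within each block $x^{(i)}$ are pairwise distinct. $f^{>0<}=f$ and $f^{>\alpha<}(x)=\sum_{j_1=0}^{\alpha_1}\cdots\sum_{j_d=0}^{\alpha_d}\big(\prod_{\ell=1}^d\prod_{k_\ell\neq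 j_\ell}(x^{(\ell)}_{j_\ell}-x^{(\ell)}_{k_\ell})^{-1}\big)f(x^{(1)}_{j_1},\ldots,x^{(d)}_{j_d})$. $f$ is $C^0_{SDS}$ if continuous ($f^{<0>}=f$); $C^k_{SDS}$ if $C^{k-1}_{SDS}$ and for all $|\alpha|=k$, $f^{>\alpha<}$ extends continuously to $f^{<\alpha>}\colon U^{<\alpha>}\to F$. Gauge on a vector space $E$ over a valued field: $q\colon E\to[0,\infty[$, $q(tx)=|t|q(x)$, each $\{q<r\}$ a $0$-neighbourhood. $g$ on $V\subseteq E$ is $C^{0,\sigma}$ if for each $x_0\in V$ and gauge $q$ on $F$ there are a gauge $p$ on $E$ and a neighbourhood $W$ of $x_0$ in $V$ with $q(g(y)-g(x))\le p(y-x)^\sigma$ for $x,y\in W$. $C^{k,\sigma}_{SDS}$: $C^k_{SDS}$ with each $f^{<\alpha>}$, $|\alpha|\le k$, $C^{0,\sigma}$. *)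

(* Defs.v *)
From HB Require Import structures.
From mathcomp Require Import all_boot all_order all_algebra.
From mathcomp Require Import all_classical reals.
From mathcomp Require Import topology_structure product_topology matrix_topology.
From mathcomp Require Import separation_axioms subspace_topology.

Set Implicit Arguments.
Unset Strict Implicit.
Unset Printing Implicit Defensive.

Import Order.TTheory GRing.Theory Num.Theory.
Local Open Scope classical_set_scope.
Local Open Scope ring_scope.

(** A field carrying a topology (axioms of a topological field are stated
    separately in [is_topological_field]). *)
HB.structure Definition TopField := {K of GRing.Field K & Topological K}.
Notation topFieldType := TopField.type.

From mathcomp Require Import exp.

Definition is_topological_field (K : topFieldType) : Prop :=
  [/\ hausdorff_space K,
      ~ (forall A : set K, open A),
      continuous (fun p : K * K => p.1 + p.2) /\
      continuous (fun p : K * K => p.1 * p.2),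
      continuous (fun x : K => - x) &
      forall x : K, x != 0 -> {for x, continuous (fun y : K => y^-1)}].

Definition topF (K : fieldType) (F : lmodType K) (tF : Topological.axioms_ F)
  : topologicalType := Topological.Pack tF.

Definition is_tvs (K : topFieldType) (F : lmodType K)
    (tF : Topological.axioms_ F) : Prop :=
  [/\ hausdorff_space (topF tF),
      continuous (fun p : topF tF * topF tF => (p.1 + p.2 : topF tF)) &
      continuous (fun p : K * topF tF => (p.1 *: p.2 : topF tF))].

Definition is_valued (K : topFieldType) (R : realType) (av : K -> R) : Prop :=
  [/\ forall x, 0 <= av x,
      forall x, av x = 0 <-> x = 0,
      forall x y, av (x * y) = av x * av y,
      forall x y, av (x + y) <= av x + av y &
      forall (x : K) (A : set K),
        nbhs x A <-> exists e : R, 0 < e /\ [set y | av (y - x) < e] `<=` A].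

Section SDS.
Variables (K : topFieldType) (F : lmodType K) (tF : Topological.axioms_ F).
Local Notation TF := (topF tF).

(** K^n is represented by row vectors 'rV[K]_n with the product topology. *)

Section Blocks.
Variables (n : nat) (alpha : 'I_n -> nat).

Definition absa : nat := \sum_(i < n) alpha i.

(** n + |alpha|, written as the number of entries of all blocks. *)
Definition dimA : nat := \sum_(i < n) (alpha i).+1.

Lemma blk_lt (i : 'I_n) (j : 'I_(alpha i).+1) :
  (\sum_(l < n | (l < i)%N) (alpha l).+1 + j < dimA)%N.
Proof.
rewrite /dimA [X in (_ < X)%N](bigID (fun l : 'I_n => (l < i)%N)) /= ltn_add2l.
rewrite (bigD1 i) ?ltnn //=.
exact: leq_trans (ltn_ord j) (leq_addr _ _).
Qed.

(** position of x^{(i)}_j in x \in K^{n+|alpha|} *)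
Definition blk (i : 'I_n) (j : 'I_(alpha i).+1) : 'I_dimA := Ordinal (blk_lt j).

Definition ent (x : 'rV[K]_dimA) (i : 'I_n) (j : 'I_(alpha i).+1) : K :=
  x ord0 (blk j).

Definition Usub (U : set 'rV[K]_n) : set 'rV[K]_dimA :=
  [set x | forall t : (forall i : 'I_n, 'I_(alpha i).+1),
             U (\row_(i < n) ent x (t i))].

Definition Udist (U : set 'rV[K]_n) : set 'rV[K]_dimA :=
  [set x | Usub U x /\
     forall (i : 'I_n) (j j' : 'I_(alpha i).+1), j != j' -> ent x j != ent x j'].

Definition sds (f : 'rV[K]_n -> F) (x : 'rV[K]_dimA) : F :=
  \sum_(t : {dffun forall i : 'I_n, 'I_(alpha i).+1})
     (\prod_(l < n) \prod_(k < (alpha l).+1 | k != t l)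
         (ent x (t l) - ent x k)^-1)
     *: f (\row_(l < n) ent x (t l)).

(** g is a continuous extension of f^{>alpha<} to U^{<alpha>}, i.e.
    g is (a representative of) f^{<alpha>} *)
Definition is_ext (U : set 'rV[K]_n) (f : 'rV[K]_n -> F)
    (g : 'rV[K]_dimA -> F) : Prop :=
  {within Usub U, continuous (g : _ -> TF)} /\ forall x, Udist U x -> g x = sds f x.

End Blocks.

Arguments Usub {n} alpha U _.
Arguments Udist {n} alpha U _.
Arguments sds {n} alpha f x.
Arguments is_ext {n} alpha U f g.

Fixpoint CSDS (k : nat) (n : nat) (U : set 'rV[K]_n) (f : 'rV[K]_n -> F)
    : Prop :=
  match k with
  | 0 => {within U, continuous (f : _ -> TF)}
  | k'.+1 => CSDS k' U f /\
      forall alpha : 'I_n -> nat, absa alpha = k'.+1 ->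
        exists g, is_ext alpha U f g
  end.

Section Holder.
Variables (R : realType) (av : K -> R).

Definition gauge (E : lmodType K) (nb0 : set_system E) (q : E -> R) : Prop :=
  [/\ forall x, 0 <= q x,
      forall (t : K) (x : E), q (t *: x) = av t * q x &
      forall r : R, 0 < r -> nb0 [set x | q x < r]].

Definition C0s (m : nat) (V : set 'rV[K]_m) (g : 'rV[K]_m -> F) (sigma : R)
    : Prop :=
  forall x0, V x0 -> forall q : F -> R, gauge (nbhs (0 : TF)) q ->
    exists p : 'rV[K]_m -> R, gauge (nbhs (0 : 'rV[K]_m)) p /\
      exists N : set 'rV[K]_m, nbhs x0 N /\
        forall x y, V x -> V y -> N x -> N y ->
          q (g y - g x) <= p (y - x) `^ sigma.

Definition CSDSs (k : nat) (sigma : R) (n : nat) (U : set 'rV[K]_n)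
    (f : 'rV[K]_n -> F) : Prop :=
  CSDS k U f /\
  forall alpha : 'I_n -> nat, (absa alpha <= k)%N ->
    forall g, is_ext alpha U f g -> C0s (Usub alpha U) g sigma.

End Holder.
End SDS.

Arguments Usub {K n} alpha U _.
Arguments Udist {K n} alpha U _.
Arguments is_ext {K F} tF {n} alpha U f g.

Definition admissible_domain (K : topFieldType) (d : nat) (U : set 'rV[K]_d)
    : Prop :=
  open U \/
  exists Ui : 'I_d -> set K,
    (forall i, Ui i `<=` closure (interior (Ui i))) /\
    U = [set x | forall i, Ui i (x ord0 i)].

(* Main.v *)
Require Import Defs.
From HB Require Import structures.
From mathcomp Require Import all_boot all_order all_algebra.
From mathcomp Require Import all_classical reals.
From mathcomp Require Import topology_structure product_topology matrix_topology.
From mathcomp Require Import separation_axioms subspace_topology exp.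
From mathcomp Require Import zify ring lra.
Import Order.TTheory GRing.Theory Num.Theory.
Local Open Scope classical_set_scope.
Local Open Scope ring_scope.

Set Implicit Arguments.
Unset Strict Implicit.
Unset Printing Implicit Defensive.

Section Comb.
Variables (n : nat) (alpha : 'I_n -> nat).

Definition OFF (x : nat) : nat := (\sum_(l < n | (l < x)%N) (alpha l).+1)%N.

Lemma blk_val (i : 'I_n) (j : 'I_(alpha i).+1) : val (blk j) = (OFF i + j)%N.
Proof. by []. Qed.

Lemma OFF_mono x y : (x <= y)%N -> (OFF x <= OFF y)%N.
Proof.
move=> xy; rewrite /OFF [X in (_ <= X)%N]big_mkcond [X in (X <= _)%N]big_mkcond /=.
apply: leq_sum => l _; case: ifP => // lx.
by rewrite (leq_trans lx xy).
Qed.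

Lemma OFF_S (l : 'I_n) : OFF l.+1 = (OFF l + (alpha l).+1)%N.
Proof.
rewrite /OFF (bigD1 l) //= addnC; congr (_ + _)%N.
by apply: eq_bigl => i; rewrite ltnS ltn_neqAle andbC.
Qed.

Lemma OFF_n : OFF n = dimA alpha.
Proof. by rewrite /OFF /dimA; apply: eq_bigl => i; rewrite ltn_ord. Qed.

Lemma OFF0 : OFF 0 = 0%N.
Proof. by rewrite /OFF big_pred0. Qed.

Lemma ex_lbl (p : 'I_(dimA alpha)) : exists l : 'I_n, (OFF l <= p < OFF l.+1)%N.
Proof.
suff: forall k, (k <= n)%N -> (p < OFF k)%N -> exists l : 'I_n, (OFF l <= p < OFF l.+1)%N.
  by move=> H; apply: (H n) => //; rewrite OFF_n.
elim=> [|k IH] kn; first by rewrite OFF0.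
move=> pk; case: (leqP (OFF k) p) => pk'.
  by exists (Ordinal kn); rewrite pk' pk.
by apply: IH => //; apply: ltnW.
Qed.

Definition lbl (p : 'I_(dimA alpha)) : 'I_n := xchoose (ex_lbl p).

Lemma lblP p : (OFF (lbl p) <= p < OFF (lbl p).+1)%N.
Proof. exact: (xchooseP (ex_lbl p)). Qed.

Lemma OFF_lt (l l' : 'I_n) : (l < l')%N -> (OFF l.+1 <= OFF l')%N.
Proof. by move=> h; apply: OFF_mono. Qed.

Lemma lbl_uniq (p : 'I_(dimA alpha)) (l : 'I_n) :
  (OFF l <= p < OFF l.+1)%N -> lbl p = l.
Proof.
move=> /andP[h1 h2]; have /andP[h3 h4] := lblP p.
case: (ltngtP (lbl p) l) => h.
- have := OFF_lt h; move: h4 h1; lia.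
- have := OFF_lt h; move: h2 h3; lia.
- exact: val_inj.
Qed.

Lemma lbl_blk (i : 'I_n) (j : 'I_(alpha i).+1) : lbl (blk j) = i.
Proof.
apply: lbl_uniq; rewrite blk_val OFF_S leq_addr /= ltn_add2l; exact: ltn_ord.
Qed.

Lemma lbl_blkP (i : 'I_n) (p : 'I_(dimA alpha)) :
  lbl p = i -> (OFF i <= p)%N /\ (p - OFF i < (alpha i).+1)%N.
Proof.
move=> <-; have /andP[h1 h2] := lblP p; rewrite OFF_S in h2.
split => //; move: h1 h2; lia.
Qed.

Lemma blk_inord (i : 'I_n) (p : 'I_(dimA alpha)) :
  lbl p = i -> blk (inord (p - OFF i) : 'I_(alpha i).+1) = p.
Proof.
move=> /lbl_blkP [h1 h2]; apply: val_inj; rewrite blk_val inordK //.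
by rewrite subnKC.
Qed.

Lemma blk_inj (i : 'I_n) : injective (@blk n alpha i).
Proof. by move=> j j' /(congr1 val); rewrite !blk_val => /addnI /val_inj. Qed.

End Comb.

Section PosForm0.
Variables (K : fieldType) (A L : finType) (lam : A -> L).

Definition validc (c : {ffun L -> A}) := [forall l, lam (c l) == l].

Definition wgt (x : A -> K) (c : {ffun L -> A}) : K :=
  \prod_(l : L) \prod_(a | (lam a == l) && (a != c l)) (x (c l) - x a)^-1.
End PosForm0.

Section PosForm.
Variables (K : fieldType) (F : lmodType K).
Variables (A : finType) (d : nat) (lam : A -> 'I_d).

Definition sdsP (f : 'rV[K]_d -> F) (x : A -> K) : F :=
  \sum_(c | validc lam c) wgt lam x c *: f (\row_l x (c l)).

End PosForm.

Lemma sds_pos (K : topFieldType) (F : lmodType K) (n : nat) (alpha : 'I_n -> nat)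
  (f : 'rV[K]_n -> F) (x : 'rV[K]_(dimA alpha)) :
  sds f x = sdsP (@lbl n alpha) f (fun p => x ord0 p).
Proof.
rewrite /sds /sdsP.
pose h (t : {dffun forall i : 'I_n, 'I_(alpha i).+1}) : {ffun 'I_n -> 'I_(dimA alpha)} :=
  [ffun l => blk (t l)].
pose h' (c : {ffun 'I_n -> 'I_(dimA alpha)}) : {dffun forall i : 'I_n, 'I_(alpha i).+1} :=
  finfun (fun l => (inord (c l - OFF alpha l) : 'I_(alpha l).+1)).
rewrite (reindex_onto h h'); last first.
  move=> c /forallP vc; apply/ffunP => l; rewrite !ffunE.
  by apply: blk_inord; apply/eqP.
apply: eq_big.
  move=> t; symmetry; apply/andP; split; last first.
    apply/eqP; apply/ffunP => l; rewrite /h /h' !ffunE; apply: val_inj => /=.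
    by rewrite addKn inordK // ltn_ord.
  by apply/forallP => l; rewrite ffunE lbl_blk.
move=> t _; congr (_ *: f _); last first.
  by apply/rowP => l; rewrite !mxE ffunE.
apply: eq_bigr => l _; rewrite ffunE.
rewrite (reindex_onto (@blk n alpha l) (fun p => inord (p - OFF alpha l))); last first.
  by move=> p /andP[/eqP lp _]; apply: blk_inord.
apply: eq_big => // k.
rewrite lbl_blk eqxx (inj_eq (@blk_inj _ _ l)) /=.
have -> : (inord (blk k - OFF alpha l) == k :> 'I__).
  by apply/eqP/val_inj => /=; rewrite addKn inordK // ltn_ord.
by rewrite andbT.
Qed.

Section Scalar.
Variables (K : fieldType) (R : finType) (z : R -> K).
Hypothesis zinj : injective z.

Definition Ssum (B : {set R}) (a : K) : K :=
  \sum_(i in B) (\prod_(k in B | k != i) (z i - z k)^-1) * (a - z i)^-1.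

Lemma Ssum_prod n : forall (B : {set R}) (a : K), #|B| = n.+1 ->
  (forall i, i \in B -> a != z i) ->
  Ssum B a = \prod_(i in B) (a - z i)^-1.
Proof.
elim: n => [|n IH] B a cB aB.
  have /cards1P [b ->] : #|B| == 1%N by rewrite cB.
  rewrite /Ssum !big_set1 big1 ?mul1r // => k /andP[/set1P -> ]; rewrite eqxx.
  done.
have : (0 < #|B|)%N by rewrite cB.
case/card_gt0P => b bB.
set B' := B :\ b.
have cB' : #|B'| = n.+1 by rewrite /B' (cardsD1 b B) bB in cB; case: cB; rewrite /B' .
have B'B i : i \in B' -> i \in B by rewrite in_setD1 => /andP[].
have B'b i : i \in B' -> i != b by rewrite in_setD1 => /andP[].
have zbB' : forall i, i \in B' -> z b != z i.
  by move=> i /B'b; apply: contra => /eqP /zinj ->.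
have IHa := IH B' a cB' (fun i iB' => aB i (B'B i iB')).
have IHb := IH B' (z b) cB' zbB'.
have ab : a - z b != 0 by rewrite subr_eq0; apply: aB.
have eB' : forall P : R -> K, \prod_(k in B | k != b) P k = \prod_(k in B') P k.
  by move=> P; apply: eq_bigl => k; rewrite in_setD1 andbC.
rewrite /Ssum (bigD1 b) //= eB'.
rewrite [X in _ = X](bigD1 b) //= eB'.
have -> : \sum_(i in B | i != b)
   (\prod_(k in B | k != i) (z i - z k)^-1) * (a - z i)^-1 =
   (a - z b)^-1 * (\sum_(i in B') (\prod_(k in B' | k != i) (z i - z k)^-1) * (a - z i)^-1
    - \sum_(i in B') (\prod_(k in B' | k != i) (z i - z k)^-1) * (z b - z i)^-1).
  rewrite -sumrB mulr_sumr [LHS](eq_bigl (fun i => i \in B')); last first.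
    by move=> k; rewrite in_setD1 andbC.
  apply: eq_bigr => i iB'.
  rewrite (bigD1 b) /=; last by rewrite bB eq_sym B'b.
  have -> : \prod_(k | (k \in B) && (k != i) && (k != b)) (z i - z k)^-1 =
            \prod_(k in B' | k != i) (z i - z k)^-1.
    by apply: eq_bigl => k; rewrite in_setD1; case: (k \in B); case: (k != i); case: (k != b).
  have ai : a - z i != 0 by rewrite subr_eq0; apply: aB; apply: B'B.
  have ib : z i - z b != 0 by rewrite subr_eq0 eq_sym; apply: zbB'.
  have bi : z b - z i != 0 by rewrite subr_eq0; apply: zbB'.
  set P := \prod_(k in B' | k != i) (z i - z k)^-1.
  field; by rewrite ai ib bi ab.
rewrite /Ssum in IHa IHb; rewrite IHa IHb.
set Q := \prod_(i in B') (z b - z i)^-1.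
have -> : \prod_(i in B') (a - z i)^-1 = \prod_(i in B') (a - z i)^-1 by [].
rewrite mulrBr addrA.
set W := \prod_(i in B') (a - z i)^-1.
by rewrite [Q / _]mulrC addrAC subrr add0r.
Qed.

End Scalar.

Section Core.
Variables (K : fieldType) (F : lmodType K) (R P : finType) (d : nat).
Variables (lam1 : R -> P) (lam2 : P -> 'I_d) (e : R -> K).
Hypothesis einj : injective e.
Hypothesis lam1S : forall p, exists r, lam1 r = p.

Definition lam12 := fun r => lam2 (lam1 r).

Lemma core_coef (c : {ffun 'I_d -> R}) : validc lam12 c ->
  \sum_(pr : {ffun P -> R} * {ffun 'I_d -> P} |
      (validc lam1 pr.1 && validc lam2 pr.2) && ([ffun l => pr.1 (pr.2 l)] == c))
    wgt lam1 e pr.1 * wgt lam2 (fun p => e (pr.1 p)) pr.2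
  = wgt lam12 e c.
Proof.
move=> /forallP vc0.
have vc l : lam2 (lam1 (c l)) = l by exact: (eqP (vc0 l)).
pose c2c : {ffun 'I_d -> P} := [ffun l => lam1 (c l)].
pose chosen p := p == lam1 (c (lam2 p)).
pose ok p r := (lam1 r == p) && (chosen p ==> (r == c (lam2 p))).
pose cond1 (c1 : {ffun P -> R}) := validc lam1 c1 && [forall l, c1 (lam1 (c l)) == c l].
have chosenE l : chosen (lam1 (c l)).
  by rewrite /chosen (vc l).
have -> : \sum_(pr : {ffun P -> R} * {ffun 'I_d -> P} |
      (validc lam1 pr.1 && validc lam2 pr.2) && ([ffun l => pr.1 (pr.2 l)] == c))
    wgt lam1 e pr.1 * wgt lam2 (fun p => e (pr.1 p)) pr.2 =
    \sum_(c1 | true) \sum_(c2 | (c2 == c2c) && cond1 c1)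
    wgt lam1 e c1 * wgt lam2 (fun p => e (c1 p)) c2.
  rewrite pair_big_dep; apply: eq_bigl => -[c1 c2] /=.
  apply/idP/idP.
    move=> /andP[/andP[/forallP v1 /forallP v2] /eqP cc].
    have c2E : c2 = c2c.
      apply/ffunP => l; rewrite /c2c ffunE -cc ffunE.
      by rewrite (eqP (v1 _)).
    rewrite c2E eqxx /= /cond1; apply/andP; split; first exact/forallP.
    apply/forallP => l; have h : c1 (c2 l) = c l by rewrite -cc ffunE.
    by move: h; rewrite c2E /c2c ffunE => ->.
  move=> /andP[/eqP -> /andP[v1 /forallP v2]].
  rewrite v1 /=; apply/andP; split.
    by apply/forallP => l; rewrite /c2c ffunE (vc l).
  by apply/eqP/ffunP => l; rewrite !ffunE (eqP (v2 l)).
have inner : forall c1 (G : {ffun 'I_d -> P} -> K),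
    \sum_(c2 | (c2 == c2c) && cond1 c1) G c2 = if cond1 c1 then G c2c else 0.
  move=> c1 G; case: (cond1 c1).
    by rewrite (eq_bigl (fun c2 => c2 == c2c)) ?big_pred1_eq // => c2; rewrite andbT.
  by rewrite big_pred0 // => c2; rewrite andbF.
under eq_bigr => c1 _ do rewrite inner.
rewrite -big_mkcond /=.
pose H p r := (\prod_(a | (lam1 a == p) && (a != r)) (e r - e a)^-1) *
   (if chosen p then 1 else (e (c (lam2 p)) - e r)^-1).
have cond1E c1 : cond1 c1 -> forall l, c1 (lam1 (c l)) = c l.
  by move=> /andP[_ /forallP h] l; apply/eqP.
have E2 c1 : cond1 c1 -> wgt lam1 e c1 * wgt lam2 (fun p => e (c1 p)) c2c =
    \prod_p H p (c1 p).
  move=> cc1; rewrite /H big_split /=; congr (_ * _).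
  rewrite [RHS](partition_big lam2 predT) //=.
  rewrite /wgt; apply: eq_bigr => l _; rewrite /c2c ffunE cond1E //.
  rewrite big_mkcond [RHS]big_mkcond /=; apply: eq_bigr => p _.
  case: eqP => [<-|//]; rewrite /chosen.
  by case: (p == lam1 (c (lam2 p))).
rewrite (eq_bigr (fun c1 : {ffun P -> R} => \prod_p H p (c1 p))); last by move=> c1; apply: E2.
have okin : forall p r, (r \in ok p) = ok p r by [].
have famE : forall c1, cond1 c1 = (c1 \in family ok).
  move=> c1; apply/idP/familyP.
    move=> cc1 p; rewrite okin /ok; apply/andP; split.
      by case/andP: cc1 => /forallP v1 _; apply: v1.
    apply/implyP; rewrite /chosen => /eqP pE.
    by rewrite {1}pE cond1E.
  move=> h; apply/andP; split.
    by apply/forallP => p; have := h p; rewrite okin => /andP[].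
  apply/forallP => l; have := h (lam1 (c l)); rewrite okin => /andP[_].
  by rewrite chosenE vc.
rewrite (eq_bigl _ _ famE) -bigA_distr_big_dep.
pose T p := \prod_(a | (lam1 a == p) && (a != c (lam2 p))) (e (c (lam2 p)) - e a)^-1.
have ET : forall p, \sum_(r | ok p r) H p r = T p.
  move=> p; rewrite /H /T; case: (boolP (chosen p)) => chp.
    rewrite (big_pred1 (c (lam2 p))); first by rewrite mulr1.
    move=> r; rewrite /ok chp /=.
    apply/andP/eqP => [[_ /eqP]//|->]; split => //.
    by move: chp; rewrite /chosen eq_sym.
  rewrite /ok (negbTE chp) /=.
  pose B : {set R} := finset (fun r => lam1 r == p).
  have nB : forall r, r \in B -> e (c (lam2 p)) != e r.
    move=> r; rewrite /B inE => /eqP rp; apply: contra chp => /eqP /einj ce.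
    by rewrite /chosen ce rp.
  have [r0 r0p] := lam1S p.
  have : (0 < #|B|)%N by apply/card_gt0P; exists r0; rewrite /B inE r0p.
  case cB: #|B| => [//|m] _.
  have := Ssum_prod einj cB nB; rewrite /Ssum.
  move=> h; rewrite (eq_bigl (fun r => r \in B)); last by move=> r; rewrite /B inE andbT.
  under eq_bigr => r rB.
    rewrite (eq_bigl (fun a => (a \in B) && (a != r))); last by move=> a; rewrite /B inE.
    over.
  rewrite h; apply: eq_bigl => a; rewrite /B inE.
  case: eqP => //= ap; apply/esym/negP => /eqP ce.
  by move: chp; rewrite /chosen -ce ap eqxx.
rewrite (eq_bigr T); last by move=> p _; exact: ET.
rewrite (partition_big lam2 predT) //= /wgt.
apply: eq_bigr => l _.
rewrite (partition_big lam1 (fun p => lam2 p == l)); last by move=> a /andP[/eqP <-].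
apply: eq_bigr => p /eqP pl; rewrite /T pl.
apply: eq_bigl => a; rewrite /lam12; case: (lam1 a =P p) => [->|_].
  by rewrite pl eqxx andbT.
by rewrite andbF.
Qed.

Lemma core (f : 'rV[K]_d -> F) :
  \sum_(c1 | validc lam1 c1) wgt lam1 e c1 *: sdsP lam2 f (fun p => e (c1 p))
  = sdsP lam12 f e.
Proof.
rewrite /sdsP.
under eq_bigr => c1 _ do rewrite scaler_sumr.
rewrite pair_big_dep /=.
rewrite (partition_big (fun pr : {ffun P -> R} * {ffun 'I_d -> P} =>
   [ffun l => pr.1 (pr.2 l)]) (validc lam12)); last first.
  move=> [c1 c2] /= /andP[/forallP v1 /forallP v2]; apply/forallP => l.
  by rewrite ffunE /lam12 (eqP (v1 _)).
apply: eq_bigr => c vc.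
rewrite (eq_bigr (fun pr => (wgt lam1 e pr.1 * wgt lam2 (fun p => e (pr.1 p)) pr.2)
    *: f (\row_l e (c l)))); last first.
  move=> [c1 c2] /= /andP[_ /eqP <-]; rewrite scalerA; congr (_ *: f _).
  by apply/rowP => l; rewrite !mxE ffunE.
by rewrite -scaler_suml core_coef.
Qed.
End Core.

Lemma OFF_split n (alpha : 'I_n -> nat) a b : (a <= b)%N ->
  OFF alpha b = (OFF alpha a + \sum_(i < n | (a <= i < b)%N) (alpha i).+1)%N.
Proof.
move=> ab; rewrite /OFF (bigID (fun i : 'I_n => (i < a)%N)) /=; congr (_ + _)%N.
  by apply: eq_bigl => i; apply/andP/idP => [[]//|ia]; split=> //; apply: leq_trans ia ab.
by apply: eq_bigl => i; rewrite -leqNgt andbC.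
Qed.

Lemma dimA_absa n (alpha : 'I_n -> nat) : dimA alpha = (absa alpha + n)%N.
Proof.
rewrite /dimA /absa; under eq_bigr => i _ do rewrite -addn1.
by rewrite big_split /= sum1_card card_ord.
Qed.

Lemma OFF_le_dimA n (alpha : 'I_n -> nat) x : (OFF alpha x <= dimA alpha)%N.
Proof.
rewrite -OFF_n; case: (leqP x n) => h; first exact: OFF_mono.
rewrite /OFF; apply/eq_leq/eq_bigl => i; rewrite ltn_ord.
by rewrite (leq_trans (ltn_ord i) (ltnW h)).
Qed.

Section Gam.
Variables (d : nat) (alpha : 'I_d -> nat) (beta : 'I_(dimA alpha) -> nat).

Definition gam (l : 'I_d) : nat :=
  (\sum_(i < dimA alpha | (OFF alpha l <= i < OFF alpha l.+1)%N) (beta i).+1).-1.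

Lemma gamS l : (gam l).+1 =
  (\sum_(i < dimA alpha | (OFF alpha l <= i < OFF alpha l.+1)%N) (beta i).+1)%N.
Proof.
rewrite /gam prednK //.
have h : (OFF alpha l < dimA alpha)%N.
  apply: leq_trans (OFF_le_dimA alpha l.+1); rewrite OFF_S.
  by rewrite addnS ltnS leq_addr.
rewrite (bigD1 (Ordinal h)) /=; first by rewrite addSn.
by rewrite leqnn OFF_S addnS ltnS leq_addr.
Qed.

Lemma OFF_gam x : (x <= d)%N -> OFF gam x = OFF beta (OFF alpha x).
Proof.
elim: x => [|x IH] xd; first by rewrite !OFF0.
have xd' : (x < d)%N by [].
have -> : x.+1 = (Ordinal xd').+1 by [].
have e1 : OFF gam (Ordinal xd') = OFF beta (OFF alpha (Ordinal xd')) := IH (ltnW xd').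
rewrite OFF_S gamS e1.
rewrite [RHS](OFF_split beta (OFF_mono alpha (leqnSn (Ordinal xd')))).
congr (_ + _)%N.
Qed.

Lemma dimA_gam : dimA gam = dimA beta.
Proof. by rewrite -OFF_n OFF_gam // OFF_n OFF_n. Qed.

Lemma absa_gam : absa gam = (absa alpha + absa beta)%N.
Proof.
have h := dimA_gam; have h1 := dimA_absa gam; have h2 := dimA_absa beta.
have h3 := dimA_absa alpha; move: h h1 h2 h3.
set a := dimA gam; set b := dimA beta; set c := dimA alpha; lia.
Qed.

Definition gcast (r : 'I_(dimA gam)) : 'I_(dimA beta) := cast_ord dimA_gam r.

Lemma lbl_gam (r : 'I_(dimA gam)) : lbl r = lbl (lbl (gcast r)).
Proof.
set r' := gcast r; set p := lbl r'; set l := lbl p.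
apply: lbl_uniq.
have /andP[h1 h2] := lblP r'.
have /andP[h3 h4] := lblP p.
have lval : (l <= d)%N by apply: ltnW.
rewrite !OFF_gam //; apply/andP; split.
  apply: leq_trans h1; exact: OFF_mono.
apply: leq_trans h2 _; exact: OFF_mono.
Qed.

Lemma gcast_inj : injective gcast.
Proof. by move=> r r' /(congr1 val) /= /val_inj. Qed.

End Gam.

Section KTop.
Variable K : topFieldType.
Hypothesis hK : is_topological_field K.

Lemma trans_cvg (c x : K) : (fun y => y + c) @ nbhs x --> x + c.
Proof.
case: hK => _ _ [hadd _] _ _.
apply: (@continuous2_cvg _ K K K (nbhs x) _ id (fun=> c) (fun a b => a + b) x c).
- exact: (hadd (x, c)).
- exact: cvg_id.
- exact: cvg_cst.
Qed.

Lemma no_open1 (a : K) : ~ open [set a].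
Proof.
move=> oa; case: hK => _ hnd _ _ _; apply: hnd => A.
rewrite openE => x Ax; rewrite /interior /=.
have h : nbhs (x + (a - x)) [set a].
  by apply: open_nbhs_nbhs; split => //; rewrite addrC subrK.
have := @trans_cvg (a - x) x _ h; rewrite /= nbhs_simpl /=.
apply: filterS => y /= e.
by have -> : y = x by apply: (addIr (a - x)); rewrite e addrC subrK.
Qed.

Lemma avoid (s : seq K) : forall O : set K, open O -> O !=set0 ->
  exists y, O y /\ y \notin s.
Proof.
case: (hK) => hH _ _ _ _.
elim: s => [|a s IH] O oO [y Oy]; first by exists y.
have c1 : closed [set a] by apply: accessible_closed_set1; apply: hausdorff_accessible.
have oO' : open (O `&` ~` [set a]) by apply: openI => //; apply: closed_openC.
have [z [Oz za]] : exists z, O z /\ z != a.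
  apply: contrapT => hn; apply: (@no_open1 a).
  suff -> : [set a] = O by [].
  apply/seteqP; split => [w -> |w Ow].
    by apply: contrapT => Oa; apply: Oa; rewrite -(_ : y = a) //; apply: contrapT => ya;
      apply: hn; exists y; split => //; apply/eqP.
  by apply: contrapT => wa; apply: hn; exists w; split => //; apply/eqP.
have [w [[Ow wa] ws]] := IH _ oO' (ex_intro _ z (conj Oz (fun e => (negP za) (introT eqP e)))).
exists w; split => //; rewrite in_cons negb_or ws andbT.
by apply/eqP.
Qed.

End KTop.

Section MxTop.
Variable T : topologicalType.

Lemma mx_nbhsP m n (y : 'M[T]_(m, n)) (A : set 'M[T]_(m, n)) : nbhs y A ->
  exists Q : 'I_m -> 'I_n -> set T, (forall i j, nbhs (y i j) (Q i j)) /\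
    (forall z : 'M[T]_(m, n), (forall i j, Q i j (z i j)) -> A z).
Proof. by case=> Q hQ sub; exists Q; split. Qed.

Lemma coord_cvg m n (y : 'M[T]_(m, n)) i j :
  (fun z : 'M[T]_(m, n) => z i j) @ nbhs y --> y i j.
Proof.
move=> B hB; rewrite /= nbhs_simpl /=.
exists (fun i' j' => if (i' == i) && (j' == j) then B else setT).
  move=> i' j'; case: ifP => [/andP[/eqP -> /eqP ->] //|_]; exact: filterT.
by move=> z /(_ i j); rewrite !eqxx.
Qed.

Definition sel M n (sig : 'I_n -> 'I_M) (y : 'rV[T]_M) : 'rV[T]_n :=
  \row_j y ord0 (sig j).

Lemma sel_cvg M n (sig : 'I_n -> 'I_M) (y : 'rV[T]_M) :
  sel sig @ nbhs y --> sel sig y.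
Proof.
move=> B /mx_nbhsP [Q [hQ sub]]; rewrite /= nbhs_simpl /=.
have : \forall z \near y, forall ij : 'I_1 * 'I_n, Q ij.1 ij.2 (sel sig z ij.1 ij.2).
  apply: (@filter_forall 'rV[T]_M ('I_1 * 'I_n)%type
     (fun ij z => Q ij.1 ij.2 (sel sig z ij.1 ij.2)) (nbhs y) _) => -[i j] /=.
  have := hQ i j; rewrite /sel mxE => h.
  have := @coord_cvg _ _ y ord0 (sig j) _ h; rewrite /= nbhs_simpl /=.
  by apply: filterS => z; rewrite mxE.
by apply: filterS => z h; apply: sub => i j; apply: (h (i, j)).
Qed.

End MxTop.

Section Density.
Variable K : topFieldType.
Hypothesis hK : is_topological_field K.

Lemma choose_inj N (O : 'I_N -> set K) : (forall m, open (O m) /\ O m !=set0) ->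
  exists z : 'I_N -> K, (forall m, O m (z m)) /\ injective z.
Proof.
move=> hO.
suff : forall k, (k <= N)%N -> exists z : 'I_N -> K, (forall m, O m (z m)) /\
   forall m m' : 'I_N, (m < k)%N -> (m' < k)%N -> z m = z m' -> m = m'.
  move=> /(_ N (leqnn N)) [z [h1 h2]]; exists z; split => // m m'.
  by apply: h2.
elim=> [|k IH] kN.
  have [z hz] : exists z : 'I_N -> K, forall m, O m (z m).
    have [z hz] := @choice _ _ (fun m v => O m v) (fun m => proj2 (hO m)).
    by exists z.
  by exists z; split.
have [z [h1 h2]] := IH (ltnW kN).
pose mk := Ordinal kN.
have [v [Ov vs]] := avoid hK (map z (seq.filter (fun m : 'I_N => (m < k)%N) (enum 'I_N)))
   (proj1 (hO mk)) (proj2 (hO mk)).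
exists (fun m => if m == mk then v else z m); split.
  by move=> m; case: eqP => [->|].
have vz : forall m : 'I_N, (m < k)%N -> v != z m.
  move=> m mk'; apply: contra vs => /eqP ->.
  by apply: map_f; rewrite mem_filter mk' mem_enum.
have mkE : forall m0 : 'I_N, (m0 == mk) = (m0 == k :> nat).
  by move=> m0; apply/eqP/eqP => [->|h]; [|apply: val_inj].
move=> m m' hm hm'.
have cm : (m == mk) || (m < k)%N by rewrite mkE -leq_eqVlt -ltnS.
have cm' : (m' == mk) || (m' < k)%N by rewrite mkE -leq_eqVlt -ltnS.
case: (m =P mk) cm => [->|_] /= hm1; case: (m' =P mk) cm' => [->|_] /= hm1' //.
- by move=> e; move: (vz _ hm1'); rewrite e eqxx.
- by move=> e; move: (vz _ hm1); rewrite e eqxx.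
- by apply: h2.
Qed.

Definition goodV N (V : set 'rV[K]_N) :=
  open V \/ exists Pm : 'I_N -> set K,
    (forall m, Pm m `<=` closure (interior (Pm m))) /\
    V = [set y | forall m, Pm m (y ord0 m)].

Lemma dense_inj N (V : set 'rV[K]_N) : goodV V ->
  forall y, V y -> forall A, nbhs y A ->
  exists y', [/\ A y', V y' & injective (fun m => y' ord0 m)].
Proof.
move=> gV y Vy A hA.
have [O [hO hOz]] : exists O : 'I_N -> set K,
    (forall m, open (O m) /\ O m !=set0) /\
    (forall z : 'rV[K]_N, (forall m, O m (z ord0 m)) -> A z /\ V z).
  case: gV => [oV | [Pm [hPm VE]]].
    have hAV : nbhs y (A `&` V) by apply: filterI => //; apply: open_nbhs_nbhs.
    have [Q [hQ sub]] := mx_nbhsP hAV.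
    exists (fun m => interior (Q ord0 m)); split.
      move=> m; split; first exact: open_interior.
      by exists (y ord0 m); apply: nbhs_singleton; apply: nbhs_interior.
    move=> z hz; apply: sub => i j; rewrite (ord1 i).
    exact: interior_subset.
  have [Q [hQ sub]] := mx_nbhsP hA.
  exists (fun m => interior (Q ord0 m) `&` interior (Pm m)); split.
    move=> m; split; first by apply: openI; apply: open_interior.
    have : closure (interior (Pm m)) (y ord0 m).
      by apply: hPm; move: Vy; rewrite VE; apply.
    rewrite closureEnbhs => /(_ (interior (Pm m)) (interior (Q ord0 m))).
    case.
    - by move=> x.
    - exact: nbhs_interior.
    by move=> x [h1 h2]; exists x.
  move=> z hz; split.
    by apply: sub => i j; rewrite (ord1 i); case: (hz j) => /interior_subset.
  by rewrite VE => m; case: (hz m) => _ /interior_subset.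
have [z [hz zinj]] := choose_inj hO.
exists (\row_m z m); have [h1 h2] : A (\row_m z m) /\ V (\row_m z m).
  by apply: hOz => m; rewrite mxE.
split => // m m'; rewrite !mxE; exact: zinj.
Qed.

End Density.

Lemma uniq_ext (X Y : topologicalType) (hY : hausdorff_space Y) (W D' : set X)
  (phi psi : X -> Y) (y : X) :
  D' `<=` W ->
  phi @ within W (nbhs y) --> phi y -> psi @ within W (nbhs y) --> psi y ->
  (forall A, nbhs y A -> exists y', A y' /\ D' y') ->
  (forall y', D' y' -> phi y' = psi y') -> phi y = psi y.
Proof.
move=> DW cphi cpsi dens agree; apply: hY => A B hA hB.
have hA' : nbhs y (fun x => W x -> A (phi x)) := cphi A hA.
have hB' : nbhs y (fun x => W x -> B (psi x)) := cpsi B hB.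
have [y' [hy Dy']] := dens _ (filterI hA' hB').
move: hy => /= [h1 h2].
exists (phi y'); split; first exact: h1 (DW _ Dy').
by rewrite agree //; apply: h2 (DW _ Dy').
Qed.

Section Toolkit.
Variables (K : topFieldType) (F : lmodType K) (tF : Topological.axioms_ F).
Hypothesis hK : is_topological_field K.
Hypothesis hF : is_tvs tF.
Local Notation TF := (topF tF).
Variables (X : Type) (G : set_system X).
Hypothesis FG : Filter G.

Lemma cvgK_add (u v : X -> K) a b : u @ G --> a -> v @ G --> b ->
  (fun x => u x + v x) @ G --> a + b.
Proof.
case: hK => _ _ [hadd _] _ _ hu hv.
exact: (@continuous2_cvg _ K K K G FG u v (fun a b => a + b) a b (hadd (a, b)) hu hv).
Qed.

Lemma cvgK_mul (u v : X -> K) a b : u @ G --> a -> v @ G --> b ->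
  (fun x => u x * v x) @ G --> a * b.
Proof.
case: hK => _ _ [_ hmul] _ _ hu hv.
exact: (@continuous2_cvg _ K K K G FG u v (fun a b => a * b) a b (hmul (a, b)) hu hv).
Qed.

Lemma cvgK_opp (u : X -> K) a : u @ G --> a -> (fun x => - u x) @ G --> - a.
Proof.
case: hK => _ _ _ hneg _ hu.
exact: (@continuous_cvg _ K K G FG u (fun a => - a) a (hneg a) hu).
Qed.

Lemma cvgK_sub (u v : X -> K) a b : u @ G --> a -> v @ G --> b ->
  (fun x => u x - v x) @ G --> a - b.
Proof. by move=> hu hv; apply: cvgK_add => //; apply: cvgK_opp. Qed.

Lemma cvgK_inv (u : X -> K) a : a != 0 -> u @ G --> a -> (fun x => (u x)^-1) @ G --> a^-1.
Proof.
case: hK => _ _ _ _ hinv a0 hu.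
exact: (@continuous_cvg _ K K G FG u (fun a => a^-1) a (hinv a a0) hu).
Qed.

Lemma cvgK_prod (I : Type) (r : seq I) (P : pred I) (u : I -> X -> K) (a : I -> K) :
  (forall i, P i -> u i @ G --> a i) ->
  (fun x => \prod_(i <- r | P i) u i x) @ G --> \prod_(i <- r | P i) a i.
Proof.
move=> hu; elim: r => [|i r IH].
  rewrite big_nil; under eq_fun do rewrite big_nil; exact: cvg_cst.
rewrite big_cons; under eq_fun do rewrite big_cons.
case: (boolP (P i)) => Pi; last exact: IH.
by apply: cvgK_mul => //; apply: hu.
Qed.

Lemma cvgF_add (u v : X -> TF) (a b : TF) : u @ G --> a -> v @ G --> b ->
  (fun x => (u x + v x : TF)) @ G --> (a + b : TF).
Proof.
case: hF => _ hadd _ hu hv.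
exact: (@continuous2_cvg _ TF TF TF G FG u v (fun a b => (a + b : TF)) a b (hadd (a, b)) hu hv).
Qed.

Lemma cvgF_scale (u : X -> K) (v : X -> TF) a (b : TF) : u @ G --> a -> v @ G --> b ->
  (fun x => (u x *: v x : TF)) @ G --> (a *: b : TF).
Proof.
case: hF => _ _ hsc hu hv.
exact: (@continuous2_cvg _ K TF TF G FG u v (fun a b => (a *: b : TF)) a b (hsc (a, b)) hu hv).
Qed.

Lemma cvgF_sum (I : Type) (r : seq I) (P : pred I) (u : I -> X -> TF) (a : I -> TF) :
  (forall i, P i -> u i @ G --> a i) ->
  (fun x => (\sum_(i <- r | P i) u i x : TF)) @ G --> (\sum_(i <- r | P i) a i : TF).
Proof.
move=> hu; elim: r => [|i r IH].
  rewrite big_nil; under eq_fun do rewrite big_nil; exact: cvg_cst.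
rewrite big_cons; under eq_fun do rewrite big_cons.
case: (boolP (P i)) => Pi; last exact: IH.
by apply: cvgF_add => //; apply: hu.
Qed.

End Toolkit.

Lemma cvg_within_map (X Y : topologicalType) (rho : X -> Y) (D : set X) (W : set Y) (y : X) :
  rho @ nbhs y --> nbhs (rho y) -> (forall x, D x -> W (rho x)) ->
  rho @ within D (nbhs y) --> within W (nbhs (rho y)).
Proof.
move=> hr DW P hP.
have h : nbhs y (fun x => W (rho x) -> P (rho x)) := hr _ hP.
rewrite /= nbhs_simpl /within /=.
by apply: filterS h => x h1 Dx; apply: h1; apply: DW.
Qed.

Lemma within_sub (X Y : topologicalType) (f : X -> Y) (D W : set X) (y : X) (l : Y) :
  D `<=` W -> f @ within W (nbhs y) --> l -> f @ within D (nbhs y) --> l.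
Proof.
move=> DW h P hP; have h' : nbhs y (fun x => W x -> P (f x)) := h P hP.
rewrite /= nbhs_simpl /within /=.
by apply: filterS h' => x h1 Dx; apply: h1; apply: DW.
Qed.

Section SdsCont.
Variables (K : topFieldType) (F : lmodType K) (tF : Topological.axioms_ F).
Hypothesis hK : is_topological_field K.
Hypothesis hF : is_tvs tF.
Local Notation TF := (topF tF).

Lemma coord_within N (D : set 'rV[K]_N) (y : 'rV[K]_N) (p : 'I_N) :
  (fun x : 'rV[K]_N => x ord0 p) @ within D (nbhs y) --> y ord0 p.
Proof.
move=> P hP; have h : nbhs y (fun x : 'rV[K]_N => P (x ord0 p)) := @coord_cvg _ _ _ y ord0 p P hP.
rewrite /= nbhs_simpl /within /=.
by apply: filterS h => x h1 _.
Qed.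

Lemma sds_cont n (beta : 'I_n -> nat) (W : set 'rV[K]_n) (g : 'rV[K]_n -> F) :
  {within W, continuous (g : _ -> TF)} -> forall y, Udist beta W y ->
  ((fun x => sds g x) : _ -> TF) @ within (Udist beta W) (nbhs y) --> (sds g y : TF).
Proof.
move=> /subspace_continuousP gc y [Wy yd].
rewrite /sds; apply: cvgF_sum => // t _.
apply: cvgF_scale => //.
  apply: cvgK_prod => // l _; apply: cvgK_prod => // k kt.
  apply: cvgK_inv => //.
    by rewrite subr_eq0; apply: yd; rewrite eq_sym.
  by apply: cvgK_sub => //; apply: coord_within.
pose rho := sel (fun l => blk (t l)) : 'rV[K]_(dimA beta) -> 'rV[K]_n.
have -> : (fun x : 'rV[K]_(dimA beta) => (g (\row_l ent x (t l)) : TF)) = g \o rho by [].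
apply: cvg_comp; last exact: (gc _ (Wy t)).
apply: cvg_within_map; first exact: sel_cvg.
by move=> x [hx _]; apply: hx.
Qed.

End SdsCont.

Section Holder2.
Variables (K : topFieldType) (F : lmodType K) (tF : Topological.axioms_ F).
Variables (R : realType) (av : K -> R).

Lemma selZ M n (sig : 'I_n -> 'I_M) (t : K) (x : 'rV[K]_M) :
  sel sig (t *: x) = t *: sel sig x.
Proof. by apply/rowP => j; rewrite !mxE. Qed.

Lemma selB M n (sig : 'I_n -> 'I_M) (x y : 'rV[K]_M) :
  sel sig (y - x) = sel sig y - sel sig x.
Proof. by apply/rowP => j; rewrite !mxE. Qed.

Lemma sel0 M n (sig : 'I_n -> 'I_M) : sel sig (0 : 'rV[K]_M) = 0.
Proof. by apply/rowP => j; rewrite !mxE. Qed.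

Lemma C0s_sel M n (sig : 'I_n -> 'I_M) (V : set 'rV[K]_M) (W : set 'rV[K]_n)
  (G : 'rV[K]_n -> F) (sigma : R) :
  (forall y, V y -> W (sel sig y)) -> C0s tF av W G sigma ->
  C0s tF av V (fun y => G (sel sig y)) sigma.
Proof.
move=> VW hG x0 Vx0 q hq.
have [p [[hp1 hp2 hp3] [N' [hN' hH]]]] := hG (sel sig x0) (VW _ Vx0) q hq.
exists (fun y => p (sel sig y)); split.
  split => //.
    by move=> t x; rewrite selZ hp2.
  move=> r r0; have hs := @sel_cvg _ _ _ sig (0 : 'rV[K]_M).
  rewrite sel0 in hs; exact: (hs _ (hp3 r r0)).
exists (sel sig @^-1` N'); split; first exact: (@sel_cvg _ _ _ sig x0 _ hN').
move=> x y Vx Vy Nx Ny; rewrite selB.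
exact: hH (VW _ Vx) (VW _ Vy) Nx Ny.
Qed.

End Holder2.

Lemma sdsP_reindex (K : fieldType) (F : lmodType K) (A A' : finType) (d : nat)
  (phi : A' -> A) (phi' : A -> A') (lam : A -> 'I_d) (f : 'rV[K]_d -> F) (x : A -> K) :
  cancel phi phi' -> cancel phi' phi ->
  sdsP (fun a => lam (phi a)) f (fun a => x (phi a)) = sdsP lam f x.
Proof.
move=> pK pK'.
have bphi : bijective phi by exists phi'.
have phi_inj : injective phi by apply: can_inj pK.
pose h (c : {ffun 'I_d -> A'}) : {ffun 'I_d -> A} := [ffun l => phi (c l)].
pose h' (c : {ffun 'I_d -> A}) : {ffun 'I_d -> A'} := [ffun l => phi' (c l)].
have bh : bijective h.
  exists h' => c; apply/ffunP => l; rewrite !ffunE ?pK ?pK' //.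
rewrite /sdsP [RHS](reindex h); last exact: onW_bij.
apply: eq_big.
  by move=> c; apply/forallP/forallP => H l; have := H l; rewrite ffunE.
move=> c _; congr (_ *: f _); last first.
  by apply/rowP => l; rewrite !mxE ffunE.
rewrite /wgt; apply: eq_bigr => l _; rewrite ffunE.
rewrite [RHS](reindex phi); last exact: onW_bij.
by apply: eq_bigl => a; rewrite (inj_eq phi_inj).
Qed.

Section UFacts.
Variable K : topFieldType.

Lemma valid_row_in n (beta : 'I_n -> nat) (W : set 'rV[K]_n) (y : 'rV[K]_(dimA beta))
  (c1 : {ffun 'I_n -> 'I_(dimA beta)}) :
  Usub beta W y -> validc (@lbl _ beta) c1 -> W (\row_p y ord0 (c1 p)).
Proof.
move=> hy /forallP vc.
have := hy (fun p => inord (c1 p - OFF beta p)).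
congr W; apply/rowP => p; rewrite !mxE /ent.
by rewrite blk_inord //; apply/eqP.
Qed.

Lemma valid_inj n (A : finType) (beta : A -> 'I_n) (c1 : {ffun 'I_n -> A}) :
  validc beta c1 -> injective c1.
Proof.
move=> /forallP vc p p' e; rewrite -(eqP (vc p)) -(eqP (vc p')) e //.
Qed.

Lemma Usub_prod n (alpha : 'I_n -> nat) (P : 'I_n -> set K) :
  Usub alpha [set x | forall i, P i (x ord0 i)] =
  [set y | forall p, P (lbl p) (y ord0 p)].
Proof.
apply/seteqP; split => y /= hy.
  move=> p.
  have := hy (fun i => inord (if i == lbl p then (p - OFF alpha (lbl p))%N else 0%N)) (lbl p).
  by rewrite mxE /ent eqxx blk_inord.
move=> t i; rewrite mxE /ent.
by have := hy (blk (t i)); rewrite lbl_blk.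
Qed.

Lemma Usub_open n (alpha : 'I_n -> nat) (W : set 'rV[K]_n) :
  open W -> open (Usub alpha W).
Proof.
move=> oW; rewrite openE => y hy; rewrite /interior.
have H : \forall z \near y, forall t : {dffun forall i : 'I_n, 'I_(alpha i).+1},
    W (\row_i ent z (t i)).
  apply: (@filter_forall _ _ (fun (t : {dffun forall i : 'I_n, 'I_(alpha i).+1}) z =>
     W (\row_i ent z (t i))) (nbhs y) _) => t.
  pose rho := sel (fun i => blk (t i)) : 'rV[K]_(dimA alpha) -> 'rV[K]_n.
  have h : nbhs (rho y) W.
    by apply: open_nbhs_nbhs; split => //; apply: hy.
  exact: (@sel_cvg _ _ _ _ y _ h).
apply: filterS H => z hz t.
have := hz [ffun i => t i]; congr W; apply/rowP => i; rewrite !mxE ffunE //.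
Qed.

End UFacts.

Section GamFacts.
Variables (K : topFieldType) (F : lmodType K) (d : nat) (alpha : 'I_d -> nat)
  (beta : 'I_(dimA alpha) -> nat).

Definition iota (y : 'rV[K]_(dimA beta)) : 'rV[K]_(dimA (gam beta)) :=
  sel (@gcast d alpha beta) y.

Lemma iota_in (U : set 'rV[K]_d) y :
  Usub beta (Usub alpha U) y -> Usub (gam beta) U (iota y).
Proof.
move=> hy u.
pose r l := @gcast d alpha beta (blk (u l)).
have lr : forall l, lbl (lbl (r l)) = l by move=> l; rewrite /r -lbl_gam lbl_blk.
pose c1 : {ffun 'I_(dimA alpha) -> 'I_(dimA beta)} :=
  [ffun p => if lbl (r (lbl p)) == p then r (lbl p) else blk (ord0 : 'I_(beta p).+1)].
have vc : validc (@lbl _ beta) c1.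
  apply/forallP => p; rewrite ffunE; case: ifP => [//|_].
  by rewrite lbl_blk.
have hz := valid_row_in hy vc.
have := hz (fun l => inord (lbl (r l) - OFF alpha l)).
congr U; apply/rowP => l; rewrite !mxE /ent mxE.
rewrite blk_inord // ffunE lr eqxx.
by rewrite /iota /sel mxE.
Qed.

Lemma iota_dist (U : set 'rV[K]_d) y : Usub beta (Usub alpha U) y ->
  injective (fun r => y ord0 r) -> Udist (gam beta) U (iota y).
Proof.
move=> hy yinj; split; first exact: iota_in.
move=> i j j' jj'; rewrite /ent /iota /sel !mxE; apply/eqP => /yinj /gcast_inj /blk_inj e.
by rewrite e eqxx in jj'.
Qed.

Lemma row_dist (U : set 'rV[K]_d) y (c1 : {ffun 'I_(dimA alpha) -> 'I_(dimA beta)}) :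
  Usub beta (Usub alpha U) y -> injective (fun r => y ord0 r) ->
  validc (@lbl _ beta) c1 -> Udist alpha U (\row_p y ord0 (c1 p)).
Proof.
move=> hy yinj vc; split; first exact: valid_row_in hy vc.
move=> i j j' jj'; rewrite /ent !mxE; apply/eqP => /yinj /(valid_inj vc) /blk_inj e.
by rewrite e eqxx in jj'.
Qed.

Lemma inj_dist (W : set 'rV[K]_(dimA alpha)) y : Usub beta W y ->
  injective (fun r => y ord0 r) -> Udist beta W y.
Proof.
move=> hy yinj; split => // i j j' jj'; rewrite /ent; apply/eqP => /yinj /blk_inj e.
by rewrite e eqxx in jj'.
Qed.

Lemma agree_core (U : set 'rV[K]_d) (f : 'rV[K]_d -> F) (g : 'rV[K]_(dimA alpha) -> F)
  (G : 'rV[K]_(dimA (gam beta)) -> F) y :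
  (forall x, Udist alpha U x -> g x = sds f x) ->
  (forall x, Udist (gam beta) U x -> G x = sds f x) ->
  Usub beta (Usub alpha U) y -> injective (fun r => y ord0 r) ->
  sds g y = G (iota y).
Proof.
move=> hg hG hy yinj.
rewrite sds_pos (hG _ (iota_dist hy yinj)) sds_pos.
have step : sdsP (@lbl _ beta) g (fun r => y ord0 r) =
   \sum_(c1 | validc (@lbl _ beta) c1) wgt (@lbl _ beta) (fun r => y ord0 r) c1 *:
      sdsP (@lbl _ alpha) f (fun p => y ord0 (c1 p)).
  rewrite /sdsP; apply: eq_bigr => c1 vc; congr (_ *: _).
  rewrite hg; last exact: row_dist.
  rewrite sds_pos; congr sdsP; apply: funext => p; rewrite mxE //.
have lS : forall p, exists r, @lbl _ beta r = p.
  by move=> p; exists (blk (ord0 : 'I_(beta p).+1)); rewrite lbl_blk.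
rewrite step (core _ yinj lS).
have -> : (fun r => (iota y) ord0 r) = (fun r => y ord0 (@gcast d alpha beta r)).
  by apply: funext => r; rewrite /iota /sel mxE.
have -> : (@lbl _ (gam beta)) = (fun r => lam12 (@lbl _ beta) (@lbl _ alpha) (@gcast d alpha beta r)).
  by apply: funext => r; rewrite lbl_gam.
by rewrite (sdsP_reindex _ _ _ (cast_ordK _) (cast_ordKV _)).
Qed.

End GamFacts.

Section CSDSFacts.
Variables (K : topFieldType) (F : lmodType K) (tF : Topological.axioms_ F).

Lemma CSDS_cont k n (V : set 'rV[K]_n) h : CSDS tF k V h -> {within V, continuous (h : _ -> topF tF)}.
Proof. by elim: k => [//|k IH] [/IH]. Qed.

Lemma CSDS_ext k n (V : set 'rV[K]_n) h : CSDS tF k V h ->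
  forall gm : 'I_n -> nat, (0 < absa gm)%N -> (absa gm <= k)%N -> exists G, is_ext tF gm V h G.
Proof.
elim: k => [|k IH] hk gm h0 hle; first by move: h0 hle; lia.
case: hk => hk1 hk2.
case: (ltnP (absa gm) k.+1) => hl.
  by apply: IH => //.
by apply: hk2; apply/eqP; rewrite eqn_leq hle hl.
Qed.

Lemma CSDS_intro m n (V : set 'rV[K]_n) h :
  {within V, continuous (h : _ -> topF tF)} ->
  (forall bt : 'I_n -> nat, (0 < absa bt)%N -> (absa bt <= m)%N -> exists G, is_ext tF bt V h G) ->
  CSDS tF m V h.
Proof.
move=> hc; elim: m => [//|m IH] hext; split.
  by apply: IH => bt h0 hle; apply: hext => //; apply: leq_trans hle _.
by move=> bt hb; apply: hext; rewrite hb.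
Qed.

Lemma C0s_eq (R : realType) (av : K -> R) m (V : set 'rV[K]_m) (h1 h2 : 'rV[K]_m -> F) sigma :
  (forall y, V y -> h1 y = h2 y) -> C0s tF av V h2 sigma -> C0s tF av V h1 sigma.
Proof.
move=> e h x0 Vx0 q hq; have [p [hp [N [hN hH]]]] := h x0 Vx0 q hq.
exists p; split => //; exists N; split => // x y Vx Vy Nx Ny.
by rewrite !e //; apply: hH.
Qed.

End CSDSFacts.

Section MainProof.
Variables (K : topFieldType) (F : lmodType K) (tF : Topological.axioms_ F).
Hypothesis hK : is_topological_field K.
Hypothesis hF : is_tvs tF.
Local Notation TF := (topF tF).
Variables (d : nat) (U : set 'rV[K]_d) (f : 'rV[K]_d -> F).
Hypothesis adm : admissible_domain U.

Lemma goodV_UU (alpha : 'I_d -> nat) (beta : 'I_(dimA alpha) -> nat) :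
  goodV (Usub beta (Usub alpha U)).
Proof.
case: adm => [oU | [Ui [hUi ->]]].
  by left; apply: Usub_open; apply: Usub_open.
right; exists (fun r => Ui (lbl (lbl r))); split.
  by move=> r; apply: hUi.
by rewrite Usub_prod (Usub_prod beta (fun p => Ui (lbl p))).
Qed.

Lemma KL (alpha : 'I_d -> nat) (beta : 'I_(dimA alpha) -> nat) g G :
  is_ext tF alpha U f g -> is_ext tF (gam beta) U f G ->
  is_ext tF beta (Usub alpha U) g (fun y => G (iota y)).
Proof.
move=> [gc hg] [Gc hG].
have cG : {within Usub beta (Usub alpha U), continuous ((fun y => G (iota y)) : _ -> TF)}.
  apply/subspace_continuousP => y hy.
  move/subspace_continuousP : Gc => Gc.
  apply: (@cvg_comp _ _ _ (@iota K d alpha beta) (G : _ -> TF) _ _ _ _ (Gc _ (iota_in hy))).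
  apply: cvg_within_map; first exact: sel_cvg.
  by move=> x hx; apply: iota_in.
split => // y hyD.
have hH : hausdorff_space TF by case: hF.
apply: (@uniq_ext _ TF hH (Udist beta (Usub alpha U))
   (fun y => Usub beta (Usub alpha U) y /\ injective (fun r => y ord0 r))
   (fun y => (G (iota y) : TF)) (fun y => (sds g y : TF)) y).
- by move=> x [hx1 hx2]; apply: inj_dist.
- apply: (@within_sub _ TF _ _ (Usub beta (Usub alpha U))); first by move=> x [].
  by move/subspace_continuousP : cG; apply; case: hyD.
- exact: sds_cont.
- move=> A hA; have [y' [h1 h2 h3]] := dense_inj hK (@goodV_UU alpha beta) (proj1 hyD) hA.
  by exists y'.
- by move=> y' [h1 h2]; rewrite (agree_core hg hG h1 h2).
Qed.

Lemma ext_eq (alpha : 'I_d -> nat) (beta : 'I_(dimA alpha) -> nat) g G h :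
  is_ext tF alpha U f g -> is_ext tF (gam beta) U f G ->
  is_ext tF beta (Usub alpha U) g h ->
  forall y, Usub beta (Usub alpha U) y -> h y = G (iota y).
Proof.
move=> hg hG [hc hh] y hy.
have [cG hG'] := KL hg hG.
have hH : hausdorff_space TF by case: hF.
apply: (@uniq_ext _ TF hH (Usub beta (Usub alpha U))
   (fun y => Usub beta (Usub alpha U) y /\ injective (fun r => y ord0 r))
   (fun y => (h y : TF)) (fun y => (G (iota y) : TF)) y).
- by move=> x [].
- by move/subspace_continuousP : hc; apply.
- by move/subspace_continuousP : cG; apply.
- move=> A hA; have [y' [h1 h2 h3]] := dense_inj hK (@goodV_UU alpha beta) hy hA.
  by exists y'.
- move=> y' [h1 h2]; have hd := inj_dist h1 h2.
  by rewrite hh // hG'.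
Qed.

Lemma part1 k : CSDS tF k U f ->
  forall alpha : 'I_d -> nat, (absa alpha <= k)%N ->
  forall g, is_ext tF alpha U f g -> CSDS tF (k - absa alpha) (Usub alpha U) g.
Proof.
move=> hk alpha ha g hg.
apply: CSDS_intro; first by case: hg.
move=> beta hb0 hb.
have [G hG] := CSDS_ext hk (gm := gam beta)
  (ltac:(rewrite absa_gam; lia)) (ltac:(rewrite absa_gam; lia)).
by exists (fun y => G (iota y)); apply: KL.
Qed.

End MainProof.

Lemma zero_ord n (beta : 'I_n -> nat) : absa beta = 0%N ->
  forall p (j : 'I_(beta p).+1), j = ord0.
Proof.
move=> hb p j.
have b0 : beta p = 0%N by move: hb; rewrite /absa (bigD1 p) //=; lia.
apply: val_inj => /=; have h1 := ltn_ord j; lia.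
Qed.

Lemma sds_zero (K : topFieldType) (F : lmodType K) n (beta : 'I_n -> nat)
  (g : 'rV[K]_n -> F) (y : 'rV[K]_(dimA beta)) :
  absa beta = 0%N -> sds g y = g (sel (fun p => blk (ord0 : 'I_(beta p).+1)) y).
Proof.
move=> hb.
have allo := zero_ord hb.
pose t0 : {dffun forall p : 'I_n, 'I_(beta p).+1} := finfun (fun p => ord0).
rewrite /sds (big_pred1 t0); last first.
  move=> t; symmetry; apply/eqP/ffunP => p; rewrite ffunE; exact: allo.
rewrite big1 ?scale1r; last first.
  move=> l _; apply: big_pred0 => k; rewrite ffunE (allo _ k) eqxx //.
by congr g; apply/rowP => l; rewrite !mxE ffunE.
Qed.

Theorem lemma2p4_aux (K : topFieldType) (d : nat) (F : lmodType K)
    (tF : Topological.axioms_ F) (U : set 'rV[K]_d) (f : 'rV[K]_d -> F) :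
  is_topological_field K -> is_tvs tF -> (0 < d)%N -> admissible_domain U ->
  (forall k : nat, CSDS tF k U f ->
     forall alpha : 'I_d -> nat, (absa alpha <= k)%N ->
     forall g, is_ext tF alpha U f g ->
       CSDS tF (k - absa alpha) (Usub alpha U) g) /\
  (forall (R : realType) (av : K -> R), is_valued av ->
   forall (k : nat) (sigma : R), 0 < sigma -> CSDSs tF av k sigma U f ->
     forall alpha : 'I_d -> nat, (absa alpha <= k)%N ->
     forall g, is_ext tF alpha U f g ->
       CSDSs tF av (k - absa alpha) sigma (Usub alpha U) g).
Proof.
move=> hK hF d0 adm; split.
  move=> k hk alpha ha g hg; exact: (part1 hK hF adm hk ha hg).
move=> R av hv k sigma s0 [hk hC] alpha ha g hg; split.
  exact: (part1 hK hF adm hk ha hg).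
move=> beta hb h hh.
case: (posnP (absa beta)) => [b0|bpos].
  have hCg := hC alpha ha g hg.
  apply: (@C0s_eq _ _ _ _ _ _ _ h (fun y => g (sel (fun p => blk (ord0 : 'I_(beta p).+1)) y))).
    move=> y hy; case: hh => _ hh; rewrite hh; first exact: sds_zero.
    split => // i j j'.
    by rewrite (zero_ord b0 j) (zero_ord b0 j') eqxx.
  apply: C0s_sel hCg => y hy; exact: (hy (fun p => ord0)).
have [G hG] := CSDS_ext hk (gm := gam beta)
  (ltac:(rewrite absa_gam; lia)) (ltac:(rewrite absa_gam; lia)).
apply: (C0s_eq (ext_eq hK hF adm hg hG hh)).
have hle : (absa (gam beta) <= k)%N by rewrite absa_gam; lia.
apply: C0s_sel (hC _ hle G hG) => y hy.
exact: iota_in.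
Qed.


Unset Implicit Arguments.

Theorem lemma2p4 (K : topFieldType) (d : nat) (F : lmodType K)
    (tF : Topological.axioms_ F) (U : set 'rV[K]_d) (f : 'rV[K]_d -> F) :
  is_topological_field K -> is_tvs tF -> (0 < d)%N -> admissible_domain U ->
  (forall k : nat, CSDS tF k U f ->
     forall alpha : 'I_d -> nat, (absa alpha <= k)%N ->
     forall g, is_ext tF alpha U f g ->
       CSDS tF (k - absa alpha) (Usub alpha U) g) /\
  (forall (R : realType) (av : K -> R), is_valued av ->
   forall (k : nat) (sigma : R), 0 < sigma -> CSDSs tF av k sigma U f ->
     forall alpha : 'I_d -> nat, (absa alpha <= k)%N ->
     forall g, is_ext tF alpha U f g ->
       CSDSs tF av (k - absa alpha) sigma (Usub alpha U) g).
Proof. exact: lemma2p4_aux. Qed.
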